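(* Let $(S,+)$ be an infinite commutative semigroup admitting a family $(A_x)_{x\in S}$ of finite subsets of $S$ such that for every $x\in S$: $x\in A_x$; $x\notin S+(S\setminus A_x)$; and $|S\setminus\{y\in S : A_x\subseteq A_y\}|<|S|$. Let $M\subseteq S$ with $|M|=|S|$, and for each $x\in M$ let $B_x\subseteq S$ satisfy $B_x\subseteq A_x\subseteq B_x+B_x$. Then every diagonal $D$ of the family $(B_x)_{x\in M}$ satisfies $D+D=S$. Moreover, if $s\in\mathbb{N}\cup\{\infty\}$ and $s(B_x)\le s$ for all $x\in M$, then $s(D)\le s$.
   Context: For $X,Y\subseteq S$, $X+Y=\{u+v: u\in X, v\in Y\}$. A set $D$ is a diagonal of the family $(B_x)_{x\in M}$ if for every finite set $F$, the set $\{x\in M : F\cap D=F\cap B_x\}$ has cardinality $|M|$. For $X\subseteq S$ and $n\in S$, $r(X,n)=|\{(u,v)\in X\times X : u+v=n\}|$ and $s(X)=\sup_{n\in S} r(X,n)$. *)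

(* Defs.v *)
From HB Require Import structures.
From mathcomp Require Import all_boot all_order all_algebra.
From mathcomp Require Import all_classical.
Set Implicit Arguments.
Unset Strict Implicit.
Unset Printing Implicit Defensive.
Local Open Scope classical_set_scope.
Local Open Scope card_scope.

Definition setadd {S : Type} (add : S -> S -> S) (X Y : set S) : set S :=
  [set w | exists u v, X u /\ Y v /\ add u v = w].

Definition is_diagonal {S : Type} (M : set S) (B : S -> set S) (D : set S) : Prop :=
  forall F : set S, finite_set F ->
    [set x | M x /\ F `&` D = F `&` B x] #= M.

(* the set of representations {(u,v) in X×X : u+v = n}; r(X,n) is its cardinal *)
Definition reps {S : Type} (add : S -> S -> S) (X : set S) (n : S) : set (S * S) :=
  [set p | X p.1 /\ X p.2 /\ add p.1 p.2 = n].

(* s(X) <= s with s in N ∪ {∞} encoded as option nat (None = ∞):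
   sup_n r(X,n) <= s  iff  r(X,n) <= s for every n. *)
Definition s_le {S : Type} (add : S -> S -> S) (X : set S) (s : option nat) : Prop :=
  match s with
  | None => True
  | Some k => forall n : S, reps add X n #<= `I_k
  end.

(* Main.v *)
Require Import Defs.
From HB Require Import structures.
From mathcomp Require Import all_boot all_order all_algebra.
From mathcomp Require Import all_classical.
Local Open Scope classical_set_scope.
Local Open Scope card_scope.

Theorem mainTheorem7 (S : Type) (add : S -> S -> S)
  (addA : forall a b c, add a (add b c) = add (add a b) c)
  (addC : forall a b, add a b = add b a)
  (Sinf : infinite_set [set: S])
  (A : S -> set S)
  (Afin : forall x, finite_set (A x))
  (Ax : forall x, A x x)
  (Anot : forall x, ~ setadd add [set: S] (~` A x) x)
  (Asmall : forall x, ~ ([set: S] #<= ~` [set y | A x `<=` A y]))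
  (M : set S) (HM : M #= [set: S])
  (B : S -> set S)
  (HBA : forall x, M x -> B x `<=` A x)
  (HAB : forall x, M x -> A x `<=` setadd add (B x) (B x)) :
  forall D : set S, is_diagonal M B D ->
    setadd add D D = [set: S] /\
    (forall s : option nat, (forall x, M x -> s_le add (B x) s) -> s_le add D s).
Proof.
move=> D HD.
have key : forall n : S, [set: S] #<= [set x | M x /\ A n `&` D = A n `&` B x].
  move=> n; have := HD (A n) (Afin n) => /card_eqPle [_ h1].
  by move: HM => /card_eqPle [_ h2]; apply: card_le_trans h2 h1.
have inAn : forall n u v, add u v = n -> A n u.
  move=> n u v uv; apply: contrapT => nu; apply: (Anot n).
  by exists v, u; split => //; split => //; rewrite addC.
have nonempty : forall (X : set S), [set: S] #<= X -> S -> exists x, X x.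
  move=> X le n; apply: contrapT => nex.
  have X0 : X = set0 by apply/seteqP; split=> x //= Xx; apply: nex; exists x.
  move: le; rewrite X0 => /card_le0P T0.
  have : [set: S] n by [].
  by rewrite T0.
split.
  apply/seteqP; split => // n _.
  have [x [[Mx Hx] Ax']] : exists x, [set x | M x /\ A n `&` D = A n `&` B x] x
      /\ A n `<=` A x.
    apply: contrapT => nex; apply: (Asmall n).
    apply: card_le_trans (key n) _; apply: subset_card_le => x Xx Ax'.
    by apply: nex; exists x.
  have [u [v [Bu [Bv uv]]]] := HAB x Mx n (Ax' n (Ax n)).
  have Au := inAn n u v uv.
  have Av : A n v by apply: (inAn n v u); rewrite addC.
  have Du : (A n `&` D) u by rewrite Hx.
  have Dv : (A n `&` D) v by rewrite Hx.
  by exists u, v; split; [case: Du|split; [case: Dv|]].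
case => [k|] Hs //= n.
have [x [Mx Hx]] := nonempty _ (key n) n.
apply: card_le_trans (Hs x Mx n); apply: subset_card_le.
move=> [u v] /= [Du [Dv uv]].
have Au := inAn n u v uv.
have Av : A n v by apply: (inAn n v u); rewrite addC.
have Bu : (A n `&` B x) u by rewrite -Hx.
have Bv : (A n `&` B x) v by rewrite -Hx.
by split; [case: Bu|split; [case: Bv|]].
Qed.
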